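(* Let $\mathcal{G}^{c}=(\mathbb{C},\mathbb{E}^{c})$ be a C-DMG over DMGs and $\mathbb{C}_X,\mathbb{C}_Y,\mathbb{C}_Z,\mathbb{C}_W$ pairwise disjoint subsets of $\mathbb{C}$, with $X,Y,Z,W$ the unions of the clusters in them. If the $\sigma$-separation condition of one of the three do-calculus rules fails in $\mathcal{G}^c$, then there exists a DMG $\mathcal{G}$ compatible with $\mathcal{G}^c$ in which the corresponding condition fails. Explicitly: (Rule 1) if $\mathbb{C}_Y$ and $\mathbb{C}_X$ are not $\sigma$-separated given $\mathbb{C}_W,do(\mathbb{C}_Z)$ in $\mathcal{G}^c$, then $Y$ and $X$ are not $\sigma$-separated given $W,do(Z)$ in $\mathcal{G}$; (Rule 2) if $\mathbb{C}_Y$ and $\mathbb{I}_{\mathbb{C}_X}$ are not $\sigma$-separated given $\mathbb{C}_X,\mathbb{C}_W,do(\mathbb{C}_Z)$ in $\mathcal{G}^c$, then $Y$ and $\mathbb{I}_X$ are not $\sigma$-separated given $X,W,do(Z)$ in $\mathcal{G}$; (Rule 3) if $\mathbb{C}_Y$ and $\mathbb{I}_{\mathbb{C}_X}$ are not $\sigma$-separated given $\mathbb{C}_W,do(\mathbb{C}_Z)$ in $\mathcal{G}^c$, then $Y$ and $\mathbb{I}_X$ are not $\sigma$-separated given $W,do(Z)$ in $\mathcal{G}$.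
   Context: A DMG $\mathcal{G}=(\mathbb{V},\mathbb{E})$ has directed edges $\to$ and bidirected edges $\leftrightarrow$, cycles allowed (DMGs induced by input/output structural causal models in the sense of Forré–Mooij 2020). A C-DMG over DMGs $\mathcal{G}^c=(\mathbb{C},\mathbb{E}^c)$ is obtained from such a DMG: $\mathbb{C}$ is a partition of $\mathbb{V}$ into nonempty clusters, and for all $C_i,C_j$ (possibly equal) $C_i\to C_j$ (resp. $C_i\leftrightarrow C_j$) is in $\mathbb{E}^c$ iff some $V_i\in C_i,V_j\in C_j$ have $V_i\to V_j$ (resp. $V_i\leftrightarrow V_j$) in $\mathbb{E}$; $\mathcal{G}$ is then compatible with $\mathcal{G}^c$. Extended graph: add for every vertex $V$ a new vertex $I_V$ and edge $I_V\to V$; $\mathbb{I}_{\mathbb{C}_X}=\{I_C:C\in\mathbb{C}_X\}$, $\mathbb{I}_X=\{I_V:V\in X\}$. ''$A$ and $B$ are $\sigma$-separated given $C,do(D)$ in $\mathcal{G}^*$'' means: in the extended graph of $\mathcal{G}^*$ with all directed edges into $D$ and all bidirected edges incident to $D$ removed, $A$ and $B$ are $\sigma$-separated by $C\cup D$. $\sigma$-separation: with $\mathrm{Sc}(V)=\mathrm{Anc}(V)\cap\mathrm{Desc}(V)$ (a vertex is its own ancestor/descendant), $A\mathbin{*\!\!\to}B$ meaning $A\to B$ or $A\leftrightarrow B$, $A\mathbin{\leftarrow\!\!*}B$ meaning $A\leftarrow B$ or $A\leftrightarrow B$, a walk $\langle V_1,\dots,V_n\rangle$ is $\sigma$-blocked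 by $W$ if (1) $V_1\in W$ or $V_n\in W$; or for some $1<i<n$: (2) $V_{i-1}\mathbin{*\!\!\to}V_i\mathbin{\leftarrow\!\!*}V_{i+1}$ and $V_i\notin W$; (3) $V_{i-1}\leftarrow V_i\mathbin{\leftarrow\!\!*}V_{i+1}$ and $V_i\in W\setminus\mathrm{Sc}(V_{i-1})$; (4) $V_{i-1}\mathbin{*\!\!\to}V_i\to V_{i+1}$ and $V_i\in W\setminus\mathrm{Sc}(V_{i+1})$; (5) $V_{i-1}\leftarrow V_i\to V_{i+1}$ and $V_i\in W\setminus(\mathrm{Sc}(V_{i-1})\cap\mathrm{Sc}(V_{i+1}))$; $W$ $\sigma$-separates $A,B$ if every walk from $A$ to $B$ is $\sigma$-blocked by $W$. *)

(* Defs.v *)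
From mathcomp Require Import all_boot.
Set Implicit Arguments. Unset Strict Implicit. Unset Printing Implicit Defensive.

Record mg (T : finType) := MG { gdir : rel T; gbi : rel T }.

Definition is_dmg (T : finType) (G : mg T) : Prop :=
  irreflexive (gdir G) /\ symmetric (gbi G) /\ irreflexive (gbi G).

(* Cluster graph induced by the partition [cl : V -> K] (blocks = fibres of cl). *)
Definition compatible (V K : finType) (cl : V -> K) (G : mg V) (Gc : mg K) : Prop :=
  forall k l : K,
    gdir Gc k l = [exists u, exists v, [&& cl u == k, cl v == l & gdir G u v]] /\
    gbi Gc k l = [exists u, exists v, [&& cl u == k, cl v == l & gbi G u v]].

(* Extended graph: inl v is the original vertex v, inr v is I_v with I_v -> v. *)
Definition ext (T : finType) (G : mg T) : mg (T + T)%type :=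
  MG (fun a b => match a, b with
                 | inl x, inl y => gdir G x y
                 | inr x, inl y => x == y
                 | _, _ => false end)
     (fun a b => match a, b with
                 | inl x, inl y => gbi G x y
                 | _, _ => false end).

Definition mutilate (T : finType) (G : mg T) (D : {set T}) : mg T :=
  MG (fun a b => gdir G a b && (b \notin D))
     (fun a b => [&& gbi G a b, a \notin D & b \notin D]).

(* Edge kinds along a walk, relative to the direction of traversal:
   Fwd : x -> y, Bwd : x <- y, Bi : x <-> y. *)
Inductive ekind := Fwd | Bwd | Bi.

Definition edge_ok (T : finType) (G : mg T) (x : T) (k : ekind) (y : T) : bool :=
  match k with Fwd => gdir G x y | Bwd => gdir G y x | Bi => gbi G x y end.

(* A walk is a start vertex x and a list of steps (edge kind, next vertex). *)
Fixpoint is_walk (T : finType) (G : mg T) (x : T) (s : seq (ekind * T)) : bool :=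
  match s with
  | [::] => true
  | (k, y) :: s' => edge_ok G x k y && is_walk G y s'
  end.

(* u \in Sc(v) = Anc(v) \cap Desc(v) (reflexive). *)
Definition in_sc (T : finType) (G : mg T) (v u : T) : bool :=
  connect (gdir G) u v && connect (gdir G) v u.

Definition into_head (k : ekind) : bool := match k with Fwd | Bi => true | Bwd => false end. (* V_{i-1} *-> V_i *)
Definition back_head (k : ekind) : bool := match k with Bwd | Bi => true | Fwd => false end. (* V_i <-* V_{i+1} *)

Definition sigma_blocked (T : finType) (G : mg T) (W : {set T}) (x : T)
    (s : seq (ekind * T)) : Prop :=
  let vs := x :: map snd s in
  let ks := map fst s in
  let n := size vs in
  let v i := nth x vs i in
  let k i := nth Fwd ks i in
  v 0 \in W \/ v n.-1 \in W \/
  exists i, 0 < i < n.-1 /\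
   (  (into_head (k i.-1) /\ back_head (k i) /\ v i \notin W)
   \/ (k i.-1 = Bwd /\ back_head (k i) /\ v i \in W /\ ~~ in_sc G (v i.-1) (v i))
   \/ (into_head (k i.-1) /\ k i = Fwd /\ v i \in W /\ ~~ in_sc G (v i.+1) (v i))
   \/ (k i.-1 = Bwd /\ k i = Fwd /\ v i \in W /\
         ~~ (in_sc G (v i.-1) (v i) && in_sc G (v i.+1) (v i)))).

Definition sigma_sep (T : finType) (G : mg T) (A B W : {set T}) : Prop :=
  forall (a : T) (s : seq (ekind * T)),
    a \in A -> last a (map snd s) \in B -> is_walk G a s -> sigma_blocked G W a s.

(* "A and B are sigma-separated given C, do(D) in G" (A,B,C,D in the extended graph). *)
Definition sep_do (T : finType) (G : mg T) (A B C D : {set (T + T)%type}) : Prop :=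
  sigma_sep (mutilate (ext G) D) A B (C :|: D).

Definition orig (T : finType) (S : {set T}) : {set (T + T)%type} := [set inl x | x in S].
Definition ivars (T : finType) (S : {set T}) : {set (T + T)%type} := [set inr x | x in S].

(* Main.v *)
Require Import Defs.
From mathcomp Require Import all_boot.
Set Implicit Arguments. Unset Strict Implicit. Unset Printing Implicit Defensive.

Lemma nth_map_eq (T1 T2 : Type) (f : T1 -> T2) x0 s i :
  nth (f x0) (map f s) i = f (nth x0 s i).
Proof. by elim: s i => [|y s IH] [|i] //=. Qed.

Lemma walk_nth (T : finType) (G : mg T) z x s i : is_walk G x s -> i < size s ->
  edge_ok G (nth z (x :: map snd s) i) (nth Fwd (map fst s) i) (nth z (x :: map snd s) i.+1).
Proof.
elim: s x i => [|[k y] s IH] x [|i] //= /andP[Hxy Hw] Hi //.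
exact: IH.
Qed.

Lemma blocked_transfer (T Tc : finType) (H : mg T) (Hc : mg Tc) (f : T -> Tc)
  (W : {set T}) (Wc : {set Tc})
  (hW : forall x, (x \in W) = (f x \in Wc))
  (hS : forall x y, gdir H x y || gdir H y x -> in_sc Hc (f x) (f y) -> in_sc H x y)
  x s : is_walk H x s -> sigma_blocked H W x s ->
  sigma_blocked Hc Wc (f x) [seq (p.1, f p.2) | p <- s].
Proof.
move=> Hw; rewrite /sigma_blocked; cbv beta zeta.
have Ev : (f x :: map snd [seq (p.1, f p.2) | p <- s]) = map f (x :: map snd s)
  by rewrite /= -!map_comp.
have Ek : map fst [seq (p.1, f p.2) | p <- s] = map fst s by rewrite -map_comp.
rewrite Ev Ek size_map.
case=> [h|[h|[i [Hi h]]]].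
- by left; rewrite nth_map_eq -hW.
- by right; left; rewrite nth_map_eq -hW.
right; right; exists i; rewrite !nth_map_eq -!hW; split=>//.
move: Hi => /andP[Hi0 Hi1]; rewrite /= size_map in Hi1.
have Ei : i.-1.+1 = i by rewrite prednK.
have E1 := walk_nth x Hw (leq_ltn_trans (leq_pred i) Hi1).
rewrite Ei in E1.
have E2 := walk_nth x Hw Hi1.
set v := nth x (x :: map snd s) in E1 E2 h *.
set k := nth Fwd (map fst s) in E1 E2 h *.
have tr : forall a b, gdir H a b || gdir H b a -> ~~ in_sc H a b -> ~~ in_sc Hc (f a) (f b).
  by move=> a b e; apply: contra; apply: hS.
case: h => [h|[h|[h|h]]].
- by left.
- right; left; case: h => [e [h1 [h2 h3]]]; rewrite e /= in E1.
  by split=>//; split=>//; split=>//; apply: tr=>//; rewrite E1 orbT.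
- right; right; left; case: h => [h1 [e [h2 h3]]]; rewrite e /= in E2.
  by split=>//; split=>//; split=>//; apply: tr=>//; rewrite E2 orbT.
- right; right; right; case: h => [e1 [e2 [h2 h3]]]; rewrite e1 /= in E1; rewrite e2 /= in E2.
  split=>//; split=>//; split=>//; apply: contra h3 => /andP[c1 c2].
  by rewrite !hS // ?E1 ?E2 ?orbT.
Qed.

Lemma walk_lift (T Tc : finType) (H : mg T) (Hc : mg Tc) (f : T -> Tc)
  (hstep : forall x k c, edge_ok Hc (f x) k c -> exists y, f y = c /\ edge_ok H x k y)
  c s : is_walk Hc c s -> forall x, f x = c ->
  exists t, is_walk H x t /\ [seq (p.1, f p.2) | p <- t] = s.
Proof.
elim: s c => [|[k c'] s IH] c /=; first by move=> _ x _; exists [::].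
move=> /andP[He Hw] x Hx; subst c.
have [y [Hy Hxy]] := hstep _ _ _ He.
have [t [Ht Et]] := IH _ Hw y Hy.
by exists ((k, y) :: t); rewrite /= Hxy Ht Et Hy.
Qed.

Lemma sep_transfer (T Tc : finType) (H : mg T) (Hc : mg Tc) (f : T -> Tc)
  (hsurj : forall c, exists x, f x = c)
  (A B W : {set T}) (Ac Bc Wc : {set Tc})
  (hA : forall x, (x \in A) = (f x \in Ac))
  (hB : forall x, (x \in B) = (f x \in Bc))
  (hW : forall x, (x \in W) = (f x \in Wc))
  (hS : forall x y, gdir H x y || gdir H y x -> in_sc Hc (f x) (f y) -> in_sc H x y)
  (hstep : forall x k c, edge_ok Hc (f x) k c -> exists y, f y = c /\ edge_ok H x k y) :
  sigma_sep H A B W -> sigma_sep Hc Ac Bc Wc.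
Proof.
move=> Hsep c s Hin Hlast Hwalk.
have [x Hx] := hsurj c.
have [t [Ht Et]] := walk_lift hstep Hwalk Hx.
subst c s.
apply: (blocked_transfer hW hS Ht).
apply: Hsep Ht; first by rewrite hA.
have E : map snd [seq (p.1, f p.2) | p <- t] = map f (map snd t) by rewrite -!map_comp.
by rewrite hB -last_map -E.
Qed.

Definition Fm (V K : finType) (cl : V -> K) (x : V + V) : K + K :=
  match x with inl u => inl (cl u) | inr u => inr (cl u) end.

Definition gmax (V K : finType) (cl : V -> K) (Gc : mg K) : mg V :=
  MG (fun u v => (u != v) && gdir Gc (cl u) (cl v))
     (fun u v => (u != v) && gbi Gc (cl u) (cl v)).

Lemma pick_other (V K : finType) (cl : V -> K) (r : rel V) (irr : irreflexive r) k l :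
  [exists u, exists v, [&& cl u == k, cl v == l & r u v]] ->
  (forall u, cl u = k -> exists w, cl w = l /\ w != u) /\
  (forall u, cl u = l -> exists w, cl w = k /\ w != u).
Proof.
move=> /existsP[u0 /existsP[v0 /and3P[/eqP hu /eqP hv e]]].
have ne : u0 != v0 by apply: contraTneq e => ->; rewrite irr.
split=> u hu'.
- case: (eqVneq v0 u) => [E|ne'].
  + subst; exists u0; split=> //; congruence.
  + by exists v0.
- case: (eqVneq u0 u) => [E|ne'].
  + subst; exists v0; split; [congruence|by rewrite eq_sym].
  + by exists u0.
Qed.

Lemma dir_pick (V K : finType) (cl : V -> K) (G0 : mg V) (Gc : mg K)
  (dmg : is_dmg G0) (comp : compatible cl G0 Gc) k l : gdir Gc k l ->
  (forall u, cl u = k -> exists w, cl w = l /\ w != u) /\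
  (forall u, cl u = l -> exists w, cl w = k /\ w != u).
Proof. by move=> e; apply: (@pick_other _ _ cl (gdir G0)); [case: dmg|rewrite -(comp k l).1]. Qed.

Lemma bi_pick (V K : finType) (cl : V -> K) (G0 : mg V) (Gc : mg K)
  (dmg : is_dmg G0) (comp : compatible cl G0 Gc) k l : gbi Gc k l ->
  (forall u, cl u = k -> exists w, cl w = l /\ w != u) /\
  (forall u, cl u = l -> exists w, cl w = k /\ w != u).
Proof. by move=> e; apply: (@pick_other _ _ cl (gbi G0)); [case: dmg => _ []|rewrite -(comp k l).2]. Qed.

Lemma hstep_lem (V K : finType) (cl : V -> K) (G0 : mg V) (Gc : mg K)
  (dmg : is_dmg G0) (comp : compatible cl G0 Gc)
  (D : {set V + V}) (Dc : {set K + K}) (hD : forall x, (x \in D) = (Fm cl x \in Dc))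
  x k c : edge_ok (mutilate (ext Gc) Dc) (Fm cl x) k c ->
  exists y, Fm cl y = c /\ edge_ok (mutilate (ext (gmax cl Gc)) D) x k y.
Proof.
case: x => u; case: k; case: c => l //=.
- move=> /andP[e nD].
  have [w [hw nw]] := (dir_pick dmg comp e).1 u erefl.
  exists (inl w); rewrite /= hw; split=> //.
  by rewrite hD /= hw nD e eq_sym nw.
- move=> /andP[e nD].
  have [w [hw nw]] := (dir_pick dmg comp e).2 u erefl.
  exists (inl w); rewrite /= hw; split=> //.
  by rewrite hD /= nD e nw.
- move=> /andP[/eqP e nD]; subst l.
  by exists (inr u); rewrite /= eqxx hD.
- move=> /and3P[e nD1 nD2].
  have [w [hw nw]] := (bi_pick dmg comp e).1 u erefl.
  exists (inl w); rewrite /= hw; split=> //.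
  by rewrite !hD /= hw nD1 nD2 e eq_sym nw.
- move=> /andP[/eqP e nD]; subst l.
  by exists (inl u); rewrite /= eqxx hD.
Qed.

Lemma no_into_inr (K : finType) (Gc : mg K) (Dc : {set K + K}) c k :
  connect (gdir (mutilate (ext Gc) Dc)) c (inr k) -> c = inr k.
Proof.
move/connectP=> [p Hp Hl]; move: Hp Hl; case/lastP: p => [|p z] //=.
rewrite rcons_path last_rcons => /andP[_ e] Hl; subst z; move: e.
by case: (last c p).
Qed.

Lemma Q_lem (V K : finType) (cl : V -> K) (G0 : mg V) (Gc : mg K)
  (dmg : is_dmg G0) (comp : compatible cl G0 Gc)
  (D : {set V + V}) (Dc : {set K + K}) (hD : forall x, (x \in D) = (Fm cl x \in Dc))
  l v (hv : cl v = l) p : forall k u, 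
  path (gdir (mutilate (ext Gc) Dc)) (inl k) p -> last (inl k) p = inl l -> p != [::] ->
  cl u = k -> u != v -> connect (gdir (mutilate (ext (gmax cl Gc)) D)) (inl u) (inl v).
Proof.
elim: p => [|c p IH] k u //= /andP[e Hp] Hl _ hu nuv.
case: c e Hp Hl => k1 //= /andP[e nD] Hp Hl.
case: p IH Hp Hl => [|c p] IH Hp Hl.
- move: Hl => /= [E]; subst k1.
  apply: connect1; by rewrite /= hD /= hv nD nuv hu e.
- have [w [hw nw]] := (dir_pick dmg comp e).1 u hu.
  have E1 : gdir (mutilate (ext (gmax cl Gc)) D) (inl u) (inl w).
    by rewrite /= hD /= hw nD eq_sym nw hu e.
  apply: connect_trans (connect1 E1) _.
  case: (eqVneq w v) => [->|nwv]; first exact: connect0.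
  exact: (IH k1 w Hp Hl).
Qed.

Lemma conn_lift (V K : finType) (cl : V -> K) (G0 : mg V) (Gc : mg K)
  (dmg : is_dmg G0) (comp : compatible cl G0 Gc)
  (D : {set V + V}) (Dc : {set K + K}) (hD : forall x, (x \in D) = (Fm cl x \in Dc))
  x y : gdir (mutilate (ext (gmax cl Gc)) D) y x ->
  connect (gdir (mutilate (ext Gc) Dc)) (Fm cl x) (Fm cl y) ->
  connect (gdir (mutilate (ext (gmax cl Gc)) D)) x y.
Proof.
case: x => v; case: y => u //=.
- move=> /andP[/andP[nuv e] nD] C.
  case: (eqVneq (cl u) (cl v)) => [E|ne].
  + rewrite -E in e; rewrite hD /= -E in nD; apply: connect1.
    by rewrite /= eq_sym nuv /= -E e /= hD /=.
  + move/connectP: C => [p Hp Hl].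
    apply: (Q_lem dmg comp hD (v := u) erefl Hp) => //.
    * by case: p Hp Hl => //= _ [E]; rewrite E eqxx in ne.
    * by rewrite eq_sym.
- by move=> _ /no_into_inr.
Qed.

Lemma hS_lem (V K : finType) (cl : V -> K) (G0 : mg V) (Gc : mg K)
  (dmg : is_dmg G0) (comp : compatible cl G0 Gc)
  (D : {set V + V}) (Dc : {set K + K}) (hD : forall x, (x \in D) = (Fm cl x \in Dc))
  x y : gdir (mutilate (ext (gmax cl Gc)) D) x y || gdir (mutilate (ext (gmax cl Gc)) D) y x ->
  in_sc (mutilate (ext Gc) Dc) (Fm cl x) (Fm cl y) ->
  in_sc (mutilate (ext (gmax cl Gc)) D) x y.
Proof.
rewrite /in_sc => /orP[e|e] /andP[c1 c2]; apply/andP; split.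
- exact: (conn_lift dmg comp hD e c1).
- exact: connect1.
- exact: connect1.
- exact: (conn_lift dmg comp hD e c2).
Qed.

Lemma mem_orig (V K : finType) (cl : V -> K) (S : {set K}) x :
  (x \in orig (cl @^-1: S)) = (Fm cl x \in orig S).
Proof.
have il : forall T : finType, injective (@inl T T) by move=> T a b [].
case: x => u /=; rewrite /orig.
- by rewrite !mem_imset ?inE // => a b [].
- by apply/imsetP/imsetP => -[].
Qed.

Lemma mem_ivars (V K : finType) (cl : V -> K) (S : {set K}) x :
  (x \in ivars (cl @^-1: S)) = (Fm cl x \in ivars S).
Proof.
have ir : forall T : finType, injective (@inr T T) by move=> T a b [].
case: x => u /=; rewrite /ivars.
- by apply/imsetP/imsetP => -[].
- by rewrite !mem_imset ?inE // => a b [].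
Qed.

Lemma gmax_ok (V K : finType) (cl : V -> K) (G0 : mg V) (Gc : mg K)
  (dmg : is_dmg G0) (comp : compatible cl G0 Gc) :
  is_dmg (gmax cl Gc) /\ compatible cl (gmax cl Gc) Gc.
Proof.
case: (dmg) => irr [sym irb]; split.
- split; first by move=> u /=; rewrite eqxx.
  split; last by move=> u /=; rewrite eqxx.
  move=> u v /=; rewrite eq_sym; congr (_ && _).
  by rewrite !(comp _ _).2; apply/existsP/existsP => -[a /existsP[b /and3P[h1 h2 h3]]];
     exists b; apply/existsP; exists a; rewrite h1 h2 sym h3.
- move=> k l; split.
  + apply/idP/existsP.
    * move=> e; have [hk _] := dir_pick dmg comp e.
      move: (e); rewrite (comp k l).1 => /existsP[a /existsP[b /and3P[/eqP h1 /eqP h2 h3]]].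
      exists a; apply/existsP; exists b; rewrite /= h1 h2 eqxx e /=.
      by rewrite eqxx andbT; apply: contraTneq h3 => ->; rewrite irr.
    * by case=> a /existsP[b /and3P[/eqP <- /eqP <- /andP[_ ->]]].
  + apply/idP/existsP.
    * move=> e.
      move: (e); rewrite (comp k l).2 => /existsP[a /existsP[b /and3P[/eqP h1 /eqP h2 h3]]].
      exists a; apply/existsP; exists b; rewrite /= h1 h2 eqxx e /=.
      by rewrite eqxx andbT; apply: contraTneq h3 => ->; rewrite irb.
    * by case=> a /existsP[b /and3P[/eqP <- /eqP <- /andP[_ ->]]].
Qed.
Unset Implicit Arguments.
Theorem theorem4 (V K : finType) (cl : V -> K)
    (cl_surj : forall k : K, exists v : V, cl v = k)
    (G0 : mg V) (G0_dmg : is_dmg G0) (Gc : mg K) (G0_comp : compatible cl G0 Gc)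
    (CX CY CZ CW : {set K})
    (dXY : [disjoint CX & CY]) (dXZ : [disjoint CX & CZ]) (dXW : [disjoint CX & CW])
    (dYZ : [disjoint CY & CZ]) (dYW : [disjoint CY & CW]) (dZW : [disjoint CZ & CW]) :
  let X := cl @^-1: CX in let Y := cl @^-1: CY in
  let Z := cl @^-1: CZ in let W := cl @^-1: CW in
  (* Rule 1 *)
  (~ sep_do Gc (orig CY) (orig CX) (orig CW) (orig CZ) ->
   exists G : mg V, [/\ is_dmg G, compatible cl G Gc &
     ~ sep_do G (orig Y) (orig X) (orig W) (orig Z)]) /\
  (* Rule 2 *)
  (~ sep_do Gc (orig CY) (ivars CX) (orig (CX :|: CW)) (orig CZ) ->
   exists G : mg V, [/\ is_dmg G, compatible cl G Gc &
     ~ sep_do G (orig Y) (ivars X) (orig (X :|: W)) (orig Z)]) /\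
  (* Rule 3 *)
  (~ sep_do Gc (orig CY) (ivars CX) (orig CW) (orig CZ) ->
   exists G : mg V, [/\ is_dmg G, compatible cl G Gc &
     ~ sep_do G (orig Y) (ivars X) (orig W) (orig Z)]).
Proof.
Proof.
move=> X Y Z W.
have [Gdmg Gcomp] := gmax_ok G0_dmg G0_comp.
have hsurj : forall c, exists x, Fm cl x = c.
  by case=> k; have [v hv] := cl_surj k; [exists (inl v) | exists (inr v)]; rewrite /= hv.
have hD : forall x, (x \in orig Z) = (Fm cl x \in orig CZ) := fun x => mem_orig cl CZ x.
have EXW : X :|: W = cl @^-1: (CX :|: CW) by rewrite preimsetU.
split; [|split]; move=> nsep; exists (gmax cl Gc); split => // sepG; apply: nsep;
  rewrite /sep_do in sepG *; rewrite ?EXW in sepG;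
  apply: (sep_transfer hsurj _ _ _ (hS_lem G0_dmg G0_comp hD) (hstep_lem G0_dmg G0_comp hD) sepG) => x;
  by rewrite ?in_setU ?mem_orig ?mem_ivars.
Qed.
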